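(* Let $(X,\rho)$ be a complete locally compact $\mathbb R$-tree and let $\mathcal B$ be the family of subsets of $\mathcal O_+(X)$ described below. For any $\mathcal U_1,\mathcal U_2\in\mathcal B$ and any order $\tau\in\mathcal U_1\cap\mathcal U_2$ there exists $\mathcal U\in\mathcal B$ with $\tau\in\mathcal U\subset\mathcal U_1\cap\mathcal U_2$.
   Context: An $\mathbb R$-tree is a geodesic metric space in which any two points are joined by a unique segment and $[xy]\subset[xz]\cup[zy]$ for all $x,y,z$. $\mathcal O_+(X)$ is the set of partial orders $\tau$ on $X$ such that any two points have a supremum $x\vee y$, $x\,\tau\, z\,\tau\, y$ implies $\rho(x,z)+\rho(z,y)=\rho(x,y)$, $\rho(x,y)=\rho(x,x\vee y)+\rho(x\vee y,y)$ for all $x,y$, and every upper cone $\{y: x\,\tau\, y\}$ is linearly ordered. $\mathcal O_+^r(X)$ consists of those having a greatest element (root); for $y\in X$, $\preceq_{(y)}$ is the order with root $y$ ($s\preceq_{(y)}t$ iff $t\in[ys]$). $\mathcal O_+^r(X)$ carries the Hausdorff metric $\operatorname{Hd}$ of orders viewed as subsets of $X\times X$ with metric $d_+((x_1,x_2),(y_1,y_2))=\rho(x_1,y_1)+\rho(x_2,y_2)$. $\mathcal B$ consists of all open subsets of $(\mathcal O_+^r(X),\operatorname{Hd})$ together with all sets $\mathcal U_{(x,y)}=\{\tau\in\mathcal O_+(X): x\,\tau\, y\}\setminus\{\preceq_{(y)}\}$ for $x\ne y$ in $X$. *)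

(* Defs.v *)
From Stdlib Require Import Reals List.
Open Scope R_scope.

Section Defs.
Context {X : Type}.
Variable rho : X -> X -> R.

Definition is_metric : Prop :=
  (forall x y, 0 <= rho x y) /\
  (forall x y, rho x y = 0 <-> x = y) /\
  (forall x y, rho x y = rho y x) /\
  (forall x y z, rho x z <= rho x y + rho y z).

Definition ball (x : X) (r : R) : X -> Prop := fun y => rho x y < r.

Definition open_set (U : X -> Prop) : Prop :=
  forall x, U x -> exists r, 0 < r /\ forall y, ball x r y -> U y.

Definition compact (K : X -> Prop) : Prop :=
  forall F : (X -> Prop) -> Prop,
    (forall U, F U -> open_set U) ->
    (forall x, K x -> exists U, F U /\ U x) ->
    exists l : list (X -> Prop),
      (forall U, In U l -> F U) /\
      (forall x, K x -> exists U, In U l /\ U x).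

Definition locally_compact : Prop :=
  forall x, exists K, compact K /\ exists r, 0 < r /\ forall y, ball x r y -> K y.

Definition cauchy (u : nat -> X) : Prop :=
  forall eps, 0 < eps -> exists N, forall m n, (N <= m)%nat -> (N <= n)%nat ->
    rho (u m) (u n) < eps.

Definition complete : Prop :=
  forall u, cauchy u -> exists l, forall eps, 0 < eps ->
    exists N, forall n, (N <= n)%nat -> rho (u n) l < eps.

Definition is_geodesic (x y : X) (g : R -> X) : Prop :=
  g 0 = x /\ g (rho x y) = y /\
  forall s t, 0 <= s <= rho x y -> 0 <= t <= rho x y ->
    rho (g s) (g t) = Rabs (s - t).

Definition image_seg (x y : X) (g : R -> X) : X -> Prop :=
  fun z => exists t, 0 <= t <= rho x y /\ g t = z.

(** [x y] : the union of images of geodesic segments from x to y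
    (in an R-tree there is exactly one). *)
Definition seg (x y : X) : X -> Prop :=
  fun z => exists g, is_geodesic x y g /\ image_seg x y g z.

Definition is_Rtree : Prop :=
  (forall x y, exists g, is_geodesic x y g) /\
  (forall x y g1 g2, is_geodesic x y g1 -> is_geodesic x y g2 ->
     forall z, image_seg x y g1 z <-> image_seg x y g2 z) /\
  (forall x y z w, seg x y w -> seg x z w \/ seg z y w).

(** Orders on X are relations; [tau s t] reads "s tau t" (s below t). *)
Definition order := X -> X -> Prop.

Definition is_partial_order (tau : order) : Prop :=
  (forall x, tau x x) /\
  (forall x y, tau x y -> tau y x -> x = y) /\
  (forall x y z, tau x y -> tau y z -> tau x z).

Definition is_sup (tau : order) (x y s : X) : Prop :=
  tau x s /\ tau y s /\ forall u, tau x u -> tau y u -> tau s u.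

Definition in_Oplus (tau : order) : Prop :=
  is_partial_order tau /\
  (forall x y, exists s, is_sup tau x y s) /\
  (forall x z y, tau x z -> tau z y -> rho x z + rho z y = rho x y) /\
  (forall x y s, is_sup tau x y s -> rho x y = rho x s + rho s y) /\
  (forall x y z, tau x y -> tau x z -> tau y z \/ tau z y).

Definition in_Oplus_r (tau : order) : Prop :=
  in_Oplus tau /\ exists r, forall x, tau x r.

Definition root_order (y : X) : order := fun s t => seg y s t.

Definition same_order (tau sigma : order) : Prop :=
  forall s t, tau s t <-> sigma s t.

(** Hd(tau, sigma) < eps, for the Hausdorff distance of tau, sigma viewed as
    subsets of X x X with d_+((x1,x2),(y1,y2)) = rho x1 y1 + rho x2 y2;
    i.e. there is delta < eps with sup_{a in tau} inf_{b in sigma} d_+(a,b) <= delta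
    and symmetrically. *)
Definition Hd_lt (tau sigma : order) (eps : R) : Prop :=
  exists delta, delta < eps /\
    (forall a1 a2, tau a1 a2 -> forall eta, 0 < eta ->
       exists b1 b2, sigma b1 b2 /\ rho a1 b1 + rho a2 b2 < delta + eta) /\
    (forall b1 b2, sigma b1 b2 -> forall eta, 0 < eta ->
       exists a1 a2, tau a1 a2 /\ rho a1 b1 + rho a2 b2 < delta + eta).

Definition Hd_open (U : order -> Prop) : Prop :=
  (forall tau, U tau -> in_Oplus_r tau) /\
  (forall tau, U tau -> exists eps, 0 < eps /\
     forall sigma, in_Oplus_r sigma -> Hd_lt tau sigma eps -> U sigma).

Definition U_xy (x y : X) : order -> Prop :=
  fun tau => in_Oplus tau /\ tau x y /\ ~ same_order tau (root_order y).

Definition in_B (U : order -> Prop) : Prop :=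
  Hd_open U \/
  exists x y, x <> y /\ forall tau, U tau <-> U_xy x y tau.

End Defs.
Arguments order : clear implicits.

(* Main.v *)
Require Import Defs.
From Stdlib Require Import Reals Lra Classical.
Open Scope R_scope.

Lemma betw (X : Type) (rho : X -> X -> R) (Hm : is_metric rho) (s : order X)
  (Hs : in_Oplus rho s) a b c :
  s a c -> s b c -> rho a b + rho b c = rho a c -> s a b.
Proof.
  destruct Hm as (Hnn & Hz & Hsym & Htri).
  destruct Hs as ((Hrf & Has & Htr) & Hsup & Hgeo & Hsupd & Hlin).
  intros Hac Hbc Hd.
  destruct (Hsup a b) as [m Hm]. pose proof Hm as Hm'.
  destruct Hm as (Ham & Hbm & Hmin).
  pose proof (Hmin c Hac Hbc) as Hmc.
  pose proof (Hgeo a m c Ham Hmc). pose proof (Hgeo b m c Hbm Hmc).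
  pose proof (Hsupd a b m Hm').
  pose proof (Hsym m b). pose proof (Hnn m b).
  assert (Eq0 : rho m b = 0) by lra. apply Hz in Eq0. subst m. exact Ham.
Qed.

Lemma pass (X : Type) (rho : X -> X -> R) (Hm : is_metric rho) (s : order X)
  (Hs : in_Oplus rho s) p w v :
  s w v -> w <> v -> rho p w + rho w v = rho p v -> s p w.
Proof.
  pose proof Hs as Hs0.
  destruct Hm as (Hnn & Hz & Hsym & Htri).
  destruct Hs as ((Hrf & Has & Htr) & Hsup & Hgeo & Hsupd & Hlin).
  intros Hwv Hne Hd.
  destruct (Hsup p w) as [q Hq]. pose proof Hq as Hq'.
  destruct Hq as (Hpq & Hwq & Hmin).
  pose proof (Hsupd p w q Hq').
  destruct (Hlin w q v Hwq Hwv) as [Hqv | Hvq].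
  - pose proof (Hgeo w q v Hwq Hqv).
    pose proof (Htri p q v). pose proof (Hsym q w). pose proof (Hnn q w).
    assert (Eq0 : rho q w = 0) by lra. apply Hz in Eq0. subst q. exact Hpq.
  - pose proof (Hgeo w v q Hwv Hvq).
    pose proof (Htri p q v). pose proof (Hsym q w). pose proof (Hsym q v).
    assert (rho w v <= 0) by lra.
    exfalso. apply Hne. apply Hz. pose proof (Hnn w v). lra.
Qed.

Lemma on_seg (X : Type) (rho : X -> X -> R) (Hm : is_metric rho) a b w :
  seg rho a b w -> rho a w = rho a b - rho w b /\ rho w b <= rho a b /\ 0 <= rho w b.
Proof.
  destruct Hm as (Hnn & Hz & Hsym & Htri).
  intros [g [(Hg0 & Hg1 & Hg) [u [Hu Hgu]]]]. subst w.
  pose proof (Hnn a b).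
  pose proof (Hg 0 u ltac:(lra) Hu). rewrite Hg0 in H0.
  pose proof (Hg u (rho a b) Hu ltac:(lra)). rewrite Hg1 in H1.
  rewrite H0, H1. unfold Rabs. destruct (Rcase_abs (0 - u)); destruct (Rcase_abs (u - rho a b)); lra.
Qed.

Lemma seg_self (X : Type) (rho : X -> X -> R) (Hm : is_metric rho) (Ht : is_Rtree rho) y s :
  seg rho y s y.
Proof.
  destruct Hm as (Hnn & Hz & Hsym & Htri).
  destruct Ht as (Hex & _ & _). destruct (Hex y s) as [g Hg].
  exists g. split; auto. exists 0. split. pose proof (Hnn y s); lra. apply Hg.
Qed.

Lemma rooteq (X : Type) (rho : X -> X -> R) (Hm : is_metric rho) (Ht : is_Rtree rho)
  (tau : order X) (Htau : in_Oplus rho tau) y :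
  (forall z, tau z y) -> same_order tau (root_order rho y).
Proof.
  intros Hr s t. unfold root_order. pose proof Hm as Hm0. pose proof Htau as Htau0.
  destruct Hm as (Hnn & Hz & Hsym & Htri).
  destruct Htau as ((Hrf & Has & Htr) & Hsup & Hgeo & Hsupd & Hlin).
  split.
  - intros Hst. pose proof (Hgeo s t y Hst (Hr t)).
    destruct Ht as (Hex & _ & H3). destruct (Hex y s) as [g Hg].
    pose proof Hg as Hg'. destruct Hg' as (Hg0 & Hg1 & Hgi).
    exists g. split; auto. exists (rho y t).
    assert (Hu : 0 <= rho y t <= rho y s).
    { pose proof (Hnn t y). pose proof (Hnn s t). rewrite (Hsym y t), (Hsym y s). lra. }
    split; auto.
    assert (Hw : seg rho y s (g (rho y t))) by (exists g; split; auto; exists (rho y t); auto).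
    pose proof (Hgi 0 (rho y t) ltac:(lra) Hu) as E1. rewrite Hg0 in E1.
    pose proof (Hgi (rho y t) (rho y s) Hu ltac:(lra)) as E2. rewrite Hg1 in E2.
    assert (E1' : rho y (g (rho y t)) = rho y t).
    { rewrite E1. unfold Rabs; destruct (Rcase_abs (0 - rho y t)); lra. }
    assert (E2' : rho (g (rho y t)) s = rho y s - rho y t).
    { rewrite E2. unfold Rabs; destruct (Rcase_abs (rho y t - rho y s)); lra. }
    destruct (H3 y s t _ Hw) as [Hs1 | Hs2].
    + apply on_seg in Hs1; auto. apply Hz.
      pose proof (Hsym (g (rho y t)) t). destruct Hs1 as (? & ? & ?). lra.
    + apply on_seg in Hs2; auto. apply Hz. rewrite Hsym.
      rewrite (Hsym y s), (Hsym y t) in *. pose proof (Hsym t s). destruct Hs2 as (? & ? & ?). lra.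
  - intros Hseg. apply on_seg in Hseg; auto.
    apply (betw X rho Hm0 tau Htau0 s t y (Hr s) (Hr t)).
    rewrite (Hsym y t), (Hsym y s) in Hseg. rewrite (Hsym s t). lra.
Qed.

Lemma fourpt (X : Type) (rho : X -> X -> R) (Hm : is_metric rho) (s : order X)
  (Hs : in_Oplus rho s) r (Hr : forall z, s z r) p q z :
  rho p r + rho q r - rho p q >= rho p r + rho z r - rho p z \/
  rho p r + rho q r - rho p q >= rho z r + rho q r - rho z q.
Proof.
  destruct Hm as (Hnn & Hz & Hsym & Htri).
  destruct Hs as ((Hrf & Has & Htr) & Hsup & Hgeo & Hsupd & Hlin).
  assert (G : forall a b, exists m, s a m /\ s b m /\
     (forall u, s a u -> s b u -> s m u) /\
     rho a b = rho a m + rho m b /\ rho a r = rho a m + rho m r /\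
     rho b r = rho b m + rho m r).
  { intros a b. destruct (Hsup a b) as [m Hm]. pose proof Hm as Hm'.
    destruct Hm as (H1 & H2 & H3). exists m. repeat split; auto.
    symmetry; apply Hgeo; auto. symmetry; apply Hgeo; auto. }
  destruct (G p q) as [m (Hpm & Hqm & Hmm & E1 & E2 & E3)].
  destruct (G p z) as [m1 (Hp1 & Hz1 & Hmm1 & F1 & F2 & F3)].
  destruct (G z q) as [m2 (Hz2 & Hq2 & Hmm2 & K1 & K2 & K3)].
  destruct (Hlin z m1 m2 Hz1 Hz2) as [H12 | H21].
  - right. assert (s m m2) by (apply Hmm; eauto).
    pose proof (Hgeo m m2 r H (Hr m2)). pose proof (Hnn m m2).
    pose proof (Hsym m q). pose proof (Hsym m2 q). lra.
  - left. assert (s m m1) by (apply Hmm; eauto).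
    pose proof (Hgeo m m1 r H (Hr m1)). pose proof (Hnn m m1).
    pose proof (Hsym m q). pose proof (Hsym m1 z). lra.
Qed.

Lemma key (X : Type) (rho : X -> X -> R) (Hm : is_metric rho) (Ht : is_Rtree rho)
  (tau : order X) (Htau : in_Oplus rho tau) r (Hr : forall z, tau z r) x y :
  tau x y -> ~ same_order tau (root_order rho y) ->
  exists eps, 0 < eps /\ forall sigma, in_Oplus_r rho sigma -> Hd_lt rho tau sigma eps ->
    sigma x y /\ ~ same_order sigma (root_order rho y).
Proof.
  intros Hxy Hns. pose proof Hm as Hm0.
  destruct Hm as (Hnn & Hz & Hsym & Htri).
  assert (Hry : r <> y).
  { intro E; subst r. apply Hns. apply rooteq; auto. }
  assert (Hb : 0 < rho y r).
  { destruct (Rle_lt_dec (rho y r) 0) as [Hle|]; auto.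
    exfalso. apply Hry. symmetry. apply Hz. pose proof (Hnn y r). lra. }
  pose proof Htau as Htau0.
  destruct Htau as (_ & _ & Hgeo & _ & _).
  pose proof (Hgeo x y r Hxy (Hr y)) as Exr.
  exists (rho y r). split; auto.
  intros sigma [Hs [r' Hr']] [delta [Hdel [Hfw _]]].
  destruct (Hfw x r (Hr x) (rho y r - delta) ltac:(lra)) as [b1 [b2 [Hb12 Hclose]]].
  pose proof Hs as Hs0. destruct Hs0 as (_ & _ & Hgs & _ & _).
  pose proof (Hgs b1 b2 r' Hb12 (Hr' b2)) as Eb.
  pose proof (Htri r b2 r'). pose proof (Htri b1 x r'). pose proof (Htri x b1 r).
  pose proof (Htri b1 b2 r). pose proof (Hsym b1 x). pose proof (Hsym b2 r).
  pose proof (Hnn x b1). pose proof (Hnn r b2).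
  assert (T : rho r r' - rho x r' + rho x r < 2 * rho y r) by lra.
  split.
  - apply (betw X rho Hm0 sigma Hs x y r' (Hr' x) (Hr' y)).
    destruct (fourpt X rho Hm0 sigma Hs r' Hr' x r y) as [F|F];
    pose proof (Htri x y r'); pose proof (Htri y r r'); pose proof (Hsym y r);
    pose proof (Hsym r y); lra.
  - intro Hso. assert (Hry' : sigma r' y) by (apply Hso; apply seg_self; auto).
    destruct Hs as ((_ & Has & _) & _).
    assert (y = r') by (apply Has; auto). subst r'.
    assert (rho y y = 0) by (apply Hz; auto).
    pose proof (Hsym y r). pose proof (Hsym x y). lra.
Qed.

Lemma hd_mono (X : Type) (rho : X -> X -> R) tau sigma e1 e2 :
  e1 <= e2 -> Hd_lt rho tau sigma e1 -> Hd_lt rho tau sigma e2.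
Proof.
  intros He [d [Hd H]]. exists d. split; auto. lra.
Qed.

Lemma loc (X : Type) (rho : X -> X -> R) (Hm : is_metric rho) (Ht : is_Rtree rho)
  (U : order X -> Prop) tau :
  in_B rho U -> in_Oplus_r rho tau -> U tau ->
  exists eps, 0 < eps /\ forall sigma, in_Oplus_r rho sigma -> Hd_lt rho tau sigma eps -> U sigma.
Proof.
  intros [[_ HO] | [x [y [Hxy HE]]]] Htr HU.
  - destruct (HO tau HU) as [e [He H]]. exists e; split; auto.
  - destruct Htr as [Htau [r Hr]].
    apply HE in HU. destruct HU as (_ & Hxy' & Hns).
    destruct (key X rho Hm Ht tau Htau r Hr x y Hxy' Hns) as [e [He H]].
    exists e. split; auto. intros sigma Hs Hd.
    apply HE. destruct (H sigma Hs Hd). split; auto. apply Hs.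
Qed.

Theorem lemma2 (X : Type) (rho : X -> X -> R)
  (Hmetric : is_metric rho) (Htree : is_Rtree rho)
  (Hcomplete : complete rho) (Hlc : locally_compact rho)
  (U1 U2 : order X -> Prop) :
  in_B rho U1 -> in_B rho U2 ->
  forall tau : order X, U1 tau -> U2 tau ->
  exists U : order X -> Prop,
    in_B rho U /\ U tau /\ (forall sigma, U sigma -> U1 sigma /\ U2 sigma).
Proof.
  intros HB1 HB2 tau H1 H2.
  destruct (classic (in_Oplus_r rho tau)) as [Hroot | Hnr].
  - exists (fun s => in_Oplus_r rho s /\ U1 s /\ U2 s).
    split; [| split; [auto | intros s (_ & A & B); auto]].
    left. split; [intros s (A & _); auto |].
    intros t (Ht & A & B).
    destruct (loc X rho Hmetric Htree U1 t HB1 Ht A) as [e1 [He1 F1]].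
    destruct (loc X rho Hmetric Htree U2 t HB2 Ht B) as [e2 [He2 F2]].
    exists (Rmin e1 e2). split. apply Rmin_glb_lt; auto.
    intros s Hs Hd. split; auto. split.
    + apply F1; auto. apply (hd_mono X rho t s (Rmin e1 e2)); auto. apply Rmin_l.
    + apply F2; auto. apply (hd_mono X rho t s (Rmin e1 e2)); auto. apply Rmin_r.
  - destruct HB1 as [[HO _] | [x1 [y1 [Hn1 E1]]]].
    { exfalso. apply Hnr. apply HO; auto. }
    destruct HB2 as [[HO _] | [x2 [y2 [Hn2 E2]]]].
    { exfalso. apply Hnr. apply HO; auto. }
    pose proof H1 as H1'. pose proof H2 as H2'.
    apply E1 in H1'. apply E2 in H2'.
    destruct H1' as (Htau & Hxy1 & _). destruct H2' as (_ & Hxy2 & _).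
    pose proof Htau as Htau0.
    destruct Htau as ((Hrf & Has & Htr) & Hsup & Hgeo & Hsupd & Hlin).
    destruct (Hsup y1 y2) as [w (Hw1 & Hw2 & _)].
    assert (Hz : exists z, ~ tau z w).
    { apply not_all_ex_not. intro Hall. apply Hnr. split; auto. exists w; auto. }
    destruct Hz as [z Hz].
    destruct (Hsup w z) as [v (Hwv & Hzv & _)].
    assert (Hnwv : w <> v) by (intro E; subst v; auto).
    exists (U_xy rho w v). split; [| split].
    + right. exists w, v. split; auto. tauto.
    + split; auto. split; auto. intro Hso.
      apply Hnr. split; auto. exists v. intro a. apply Hso. apply seg_self; auto.
    + intros sigma (Hs & Hswv & _).
      assert (G : forall a b, tau a b -> tau b w -> a <> b ->
                  U_xy rho a b sigma).
      { intros a b Hab Hbw Hnab.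
        assert (Ha : sigma a w).
        { apply (pass X rho Hmetric sigma Hs a w v Hswv Hnwv).
          apply Hgeo; eauto. }
        assert (Hb : sigma b w).
        { apply (pass X rho Hmetric sigma Hs b w v Hswv Hnwv).
          apply Hgeo; eauto. }
        assert (Hsab : sigma a b).
        { apply (betw X rho Hmetric sigma Hs a b w Ha Hb). apply Hgeo; auto. }
        split; auto. split; auto. intro Hso.
        assert (Hvb : sigma v b) by (apply Hso; apply seg_self; auto).
        destruct Hs as ((_ & Has' & Htr') & _).
        assert (b = v) by (apply Has'; eauto).
        subst b. apply Hnwv. apply Has'; auto. }
      split.
      * apply E1. apply G; auto.
      * apply E2. apply G; auto.
Qed.
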